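(* $\mathrm{Cl}_q(n,1/2)\cong\mathrm{Cl}(\mathbb{k}^n\oplus(\mathbb{k}^n)^* )$ as $\mathbb{k}$-algebras, where the right side is the classical Clifford algebra generated by $v_1,\dots,v_n,v_1^*,\dots,v_n^*$ subject to $v_av_b+v_bv_a=v_a^*v_b^*+v_b^*v_a^*=0$ and $v_av_b^*+v_b^*v_a=\delta_{ab}$.
   Context: Let $\mathbb{k}$ be a field of characteristic different from $2$, $q\in\mathbb{k}^\times$, $n$ a positive integer. $\mathrm{Cl}_q(n,1/2)$ is the unital associative $\mathbb{k}$-algebra generated by $\omega_a,\phi_a,\phi_a^*$ ($a=1,\dots,n$) subject to, for all $a,b$: $\omega_a\omega_b=\omega_b\omega_a$; $\omega_a^{2}=(1+q^{-1})\omega_a-q^{-1}$; $\omega_a\phi_b=q^{\delta_{ab}}\phi_b\omega_a$; $\omega_a\phi_b^*=q^{-\delta_{ab}}\phi_b^*\omega_a$; $\phi_a\phi_b+\phi_b\phi_a=0$; $\phi_a^*\phi_b^*+\phi_b^*\phi_a^*=0$; $\phi_a\phi_a^*+\phi_a^*\phi_a=1$; $\phi_a\phi_a^*+q^{-1}\phi_a^*\phi_a=\omega_a$; $\phi_a\phi_b^*+\phi_b^*\phi_a=0$ if $a\neq b$ (this is the case $k=1/2$ of the half-twist quantum Clifford algebra, whose relations are those with $\omega_a^{4k}=(1+q^{-2k})\omega_a^{2k}-q^{-2k}$ and $\phi_a\phi_a^*+q^{-2k}\phi_a^*\phi_a=\omega_a^{2k}$). *)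

(* Defs.v *)
From HB Require Import structures.
From mathcomp Require Import all_boot all_order all_algebra.
Set Implicit Arguments. Unset Strict Implicit. Unset Printing Implicit Defensive.
Import GRing.Theory.
Local Open Scope ring_scope.

Definition alg_hom (k : fieldType) (A B : algType k) (f : A -> B) : Prop :=
  [/\ forall x y, f (x + y) = f x + f y,
      forall (c : k) x, f (c *: x) = c *: f x,
      forall x y, f (x * y) = f x * f y
    & f 1 = 1].

(* Defining relations of Cl_q(n,1/2) on elements w, p, ps : 'I_n -> A
   (w = omega, p = phi, ps = phi^* ). *)
Definition Clq_rels (k : fieldType) (q : k) (n : nat) (A : algType k)
    (w p ps : 'I_n -> A) : Prop :=
  forall a b : 'I_n,
  [/\ w a * w b = w b * w a,
      w a ^+ 2 = (1 + q^-1) *: w a - q^-1%:A,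
      w a * p b = q ^+ (a == b) *: (p b * w a)
    & w a * ps b = (q^-1) ^+ (a == b) *: (ps b * w a)] /\
  [/\ p a * p b + p b * p a = 0,
      ps a * ps b + ps b * ps a = 0,
      p a * ps a + ps a * p a = 1,
      p a * ps a + q^-1 *: (ps a * p a) = w a
    & a != b -> p a * ps b + ps b * p a = 0].

Definition is_Clq (k : fieldType) (q : k) (n : nat) (A : algType k)
    (w p ps : 'I_n -> A) : Prop :=
  Clq_rels q w p ps /\
  forall (B : algType k) (w' p' ps' : 'I_n -> B), Clq_rels q w' p' ps' ->
    (exists f : A -> B, alg_hom f /\
       forall a, [/\ f (w a) = w' a, f (p a) = p' a & f (ps a) = ps' a]) /\
    (forall f g : A -> B, alg_hom f -> alg_hom g ->
       (forall a, [/\ f (w a) = g (w a), f (p a) = g (p a) & f (ps a) = g (ps a)]) ->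
       f =1 g).

Definition Cliff_rels (k : fieldType) (n : nat) (A : algType k)
    (v vs : 'I_n -> A) : Prop :=
  forall a b : 'I_n,
  [/\ v a * v b + v b * v a = 0,
      vs a * vs b + vs b * vs a = 0
    & v a * vs b + vs b * v a = (a == b)%:R].

Definition is_Cliff (k : fieldType) (n : nat) (A : algType k)
    (v vs : 'I_n -> A) : Prop :=
  Cliff_rels v vs /\
  forall (B : algType k) (v' vs' : 'I_n -> B), Cliff_rels v' vs' ->
    (exists f : A -> B, alg_hom f /\
       forall a, f (v a) = v' a /\ f (vs a) = vs' a) /\
    (forall f g : A -> B, alg_hom f -> alg_hom g ->
       (forall a, f (v a) = g (v a) /\ f (vs a) = g (vs a)) -> f =1 g).

(* Main.v *)
Require Import Defs.
From mathcomp Require Import all_boot all_order all_algebra.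
From mathcomp Require Import ring.
Import GRing.Theory.
Local Open Scope ring_scope.

Section Loc.

Variables (k : fieldType) (A : algType k).

Lemma prodA (e : A) (a b c d : k) : e * e = e ->
  (a%:A + b *: e) * (c%:A + d *: e) = (a * c)%:A + (a * d + b * c + b * d) *: e.
Proof.
move=> he.
rewrite mulrDl !mulrDr mulr_algl mulr_algr mulr_algl -scalerAl -scalerAr he.
rewrite !scalerA !scalerDl -addrA; congr (_ + _).
by rewrite addrA [c * b]mulrC.
Qed.

Lemma sq0 (h2 : (2%:R : k) != 0) (x : A) : x * x + x * x = 0 -> x * x = 0.
Proof.
move=> h; have : (2%:R : k) *: (x * x) = 0 by rewrite scaler_nat mulr2n.
by move/(congr1 (fun z => (2%:R : k)^-1 *: z)); rewrite scalerA mulVf // scale1r scaler0.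
Qed.

Lemma anti_eq (x z : A) : x * z + z * x = 0 -> z * x = - (x * z).
Proof. by move=> h; apply/eqP; rewrite -addr_eq0 addrC h. Qed.

Lemma anti_comm (x y z : A) : x * z + z * x = 0 -> y * z + z * y = 0 ->
  GRing.comm z (x * y).
Proof.
move=> /anti_eq h1 /anti_eq h2; rewrite /GRing.comm.
by rewrite mulrA h1 mulNr -[x * z * y]mulrA h2 mulrN opprK mulrA.
Qed.

Lemma commZ (z u : A) (c : k) : GRing.comm z u -> GRing.comm z (c *: u).
Proof. by rewrite /GRing.comm -scalerAl -scalerAr => ->. Qed.

Variables (x y : A) (c : k).
Hypotheses (hx : x * x = 0) (hy : y * y = 0) (hxy : x * y + y * x = 1).

Lemma hyx : y * x = 1 - x * y.
Proof. by rewrite -hxy [x * y + _]addrC addrK. Qed.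

Lemma he : (x * y) * (x * y) = x * y.
Proof. by rewrite -mulrA (mulrA y) hyx mulrBl mul1r mulrBr -!mulrA hy !mulr0 subr0. Qed.

Lemma hW : x * y + c *: (y * x) = c%:A + (1 - c) *: (x * y).
Proof.
rewrite hyx scalerBr scalerBl scale1r !addrA; congr (_ + _).
by rewrite addrC.
Qed.

Lemma hW2 : (x * y + c *: (y * x)) ^+ 2 = (1 + c) *: (x * y + c *: (y * x)) - c%:A.
Proof.
rewrite hW expr2 prodA; last exact: he.
rewrite scalerDr !scalerA [in RHS]addrAC -scalerBl.
by congr (_ + _); congr (_ *: _); ring.
Qed.

Lemma hWx : (x * y + c *: (y * x)) * x = x.
Proof.
rewrite hW mulrDl mulr_algl -scalerAl -mulrA hyx mulrBr mulr1 mulrA hx mul0r subr0.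
by rewrite -scalerDl [c + _]addrC subrK scale1r.
Qed.
Lemma hxW : x * (x * y + c *: (y * x)) = c *: x.
Proof. by rewrite hW mulrDr mulr_algr -scalerAr mulrA hx mul0r scaler0 addr0. Qed.
Lemma hWy : (x * y + c *: (y * x)) * y = c *: y.
Proof. by rewrite hW mulrDl mulr_algl -scalerAl -mulrA hy mulr0 scaler0 addr0. Qed.
Lemma hyW : y * (x * y + c *: (y * x)) = y.
Proof.
rewrite hW mulrDr mulr_algr -scalerAr mulrA hyx mulrBl mul1r -mulrA hy mulr0 subr0.
by rewrite -scalerDl [c + _]addrC subrK scale1r.
Qed.
End Loc.

Lemma alg_hom_id (k : fieldType) (A : algType k) : alg_hom (@id A).
Proof. by []. Qed.

Lemma alg_hom_comp (k : fieldType) (A B C : algType k) (f : A -> B) (g : B -> C) :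
  alg_hom f -> alg_hom g -> alg_hom (g \o f).
Proof.
move=> [f1 f2 f3 f4] [g1 g2 g3 g4]; split=> /=.
- by move=> a b; rewrite f1 g1.
- by move=> a b; rewrite f2 g2.
- by move=> a b; rewrite f3 g3.
by rewrite f4 g4.
Qed.

Theorem theorem5p3 (k : fieldType) (q : k) (n : nat) :
  (2%:R : k) != 0 -> q != 0 -> (0 < n)%N ->
  forall (A : algType k) (w p ps : 'I_n -> A), is_Clq q w p ps ->
  forall (C : algType k) (v vs : 'I_n -> C), is_Cliff v vs ->
  exists f : A -> C, alg_hom f /\ bijective f.
Proof.
move=> h2 hq _ A w p ps [HA UA] C v vs [HC UC].
pose w' a := v a * vs a + q^-1 *: (vs a * v a).
have loc : forall a, [/\ v a * v a = 0, vs a * vs a = 0 & v a * vs a + vs a * v a = 1].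
  move=> a; have [h1 h2' h3] := HC a a; rewrite eqxx in h3;
  by split=> //; apply: sq0.
have HC' : Clq_rels q w' v vs.
  move=> a b; have [hx hy hxy] := loc a.
  have [hbx hby hbxy] := loc b.
  case: (eqVneq a b) => [<-|nab].
    rewrite !expr1; split; split => //.
    - by rewrite /w' hW2.
    - by rewrite /w' hWx // hxW // scalerA mulfV // scale1r.
    - by rewrite /w' hWy // hyW.
    - by rewrite hx addr0.
    - by rewrite hy addr0.
  have [Hvv Hss Hvs] := HC a b; have [Hvv' Hss' Hvs'] := HC b a.
  rewrite (negbTE nab) in Hvs; rewrite eq_sym (negbTE nab) in Hvs'.
  rewrite !expr0 !scale1r.
  have cxb : GRing.comm (v b) (w' a).
    apply: commrD; first apply: anti_comm.
    - exact: Hvv.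
    - by rewrite addrC Hvs'.
    apply: commZ; apply: anti_comm; first by rewrite addrC Hvs'.
    exact: Hvv.
  have cyb : GRing.comm (vs b) (w' a).
    apply: commrD; first apply: anti_comm.
    - exact: Hvs.
    - exact: Hss.
    apply: commZ; apply: anti_comm; first exact: Hss.
    exact: Hvs.
  split; split => //.
  - exact: (commrD (commrM (esym cxb) (esym cyb)) (@commZ _ _ _ _ q^-1 (commrM (esym cyb) (esym cxb)))).
  - by rewrite /w' hW2.
have HA' : Cliff_rels p ps.
  move=> a b; have [_ [h1 h2' h3 h4 h5]] := HA a b.
  split => //; case: (eqVneq a b) => [<-|nab] /=.
    by have [_ [_ _ -> _ _]] := HA a a.
  by rewrite h5.
have [[f [fh fv]] _] := (UA C w' v vs HC').
have [[g [gh gv]] _] := (UC A p ps HA').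
exists f; split => //; exists g.
- have [_ uq] := UA A w p ps HA.
  move=> x; apply: (uq (g \o f) id (@alg_hom_comp _ _ _ _ _ _ fh gh) (alg_hom_id _ _)) => a /=.
  have [e1 e2 e3] := fv a; have [g1 g2] := gv a.
  rewrite e1 e2 e3 g1 g2; split => //.
  have [G1 G2 G3 G4] := gh.
  rewrite /w' G1 G2 G3 G3 g1 g2.
  by have [_ [_ _ _ -> _]] := HA a a.
- have [_ uq] := UC C v vs HC.
  move=> x; apply: (uq (f \o g) id (@alg_hom_comp _ _ _ _ _ _ gh fh) (alg_hom_id _ _)) => a /=.
  have [e1 e2 e3] := fv a; have [g1 g2] := gv a.
  by rewrite g1 g2 e2 e3.
Qed.
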